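(* Let $m\ge n$, $B\in\mathbb R^{n\times m}$ of full row rank, $f:\mathbb R^m\to\mathbb R$, $h:\mathbb R^n\to\mathbb R$ convex and continuously differentiable with Lipschitz gradients, $\mathcal L(u,p)=f(u)-h(p)+(Bu,p)$, and let $(u^*,p^* )$ be the saddle point of $\mathcal L$. Let $\mathcal I_{\mathcal V}$ ($m\times m$) and $\mathcal I_{\mathcal Q}$ ($n\times n$) be symmetric positive definite. Assume $f\in\mathcal S^{1,1}_{\mu_{f,\mathcal I_{\mathcal V}},L_{f,\mathcal I_{\mathcal V}}}$ with respect to $\mathcal I_{\mathcal V}$ with $0<\mu_{f,\mathcal I_{\mathcal V}}\le L_{f,\mathcal I_{\mathcal V}}<2$. Define the Lyapunov function $\mathcal E(u,p)=\frac12\|u-u^*\|^2_{\mathcal I_{\mathcal V}}+\frac12\|p-p^*\|^2_{\mathcal I_{\mathcal Q}}$ and the transformed primal-dual (TPD) vector field $\mathcal G=(\mathcal G^u,\mathcal G^p)$, $$\mathcal G^u(u,p)=-\mathcal I_{\mathcal V}^{-1}(\nabla f(u)+B^\top p),\qquad \mathcal G^p(u,p)=-\mathcal I_{\mathcal Q}^{-1}\big(\nabla h_B(p)-Be(u)\big).$$ Then for all $(u,p)$, $$-\nabla\mathcal E(u,p)\cdot\mathcal G(u,p)\ \ge\ \mu\,\mathcal E(u,p)+\frac{\mu_{f,\mathcal I_{\mathcal V}}}{2}\|v-v^*\|^2_{\mathcal I_{\mathcal V}},$$ where $\mu=\min\{\mu_{\mathcal V},\mu_{\mathcal Q}\}>0$,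 $v=u+\mathcal I_{\mathcal V}^{-1}B^\top p$, $v^*=u^*+\mathcal I_{\mathcal V}^{-1}B^\top p^*$. Consequently, if $(u(t),p(t))$ solves $u'=\mathcal G^u(u,p)$, $p'=\mathcal G^p(u,p)$, then $\mathcal E(u(t),p(t))\le e^{-\mu t}\mathcal E(u(0),p(0))$ for all $t>0$.
   Context: $(\cdot,\cdot)$ is the Euclidean inner product; for SPD $M$, $\|x\|_M=(Mx,x)^{1/2}$. A saddle point satisfies $\nabla f(u^* )+B^\top p^*=0$, $Bu^*=\nabla h(p^* )$. Bregman divergence: $D_g(y,x)=g(y)-g(x)-(\nabla g(x),y-x)$; $g\in\mathcal S^{1,1}_{\mu_{g,M},L_{g,M}}$ with respect to SPD $M$ means $\frac{\mu_{g,M}}{2}\|x-y\|_M^2\le D_g(y,x)\le\frac{L_{g,M}}{2}\|x-y\|_M^2$ for all $x,y$. Here $e(u)=u-\mathcal I_{\mathcal V}^{-1}\nabla f(u)$ and $h_B(p)=h(p)+\frac12(B\mathcal I_{\mathcal V}^{-1}B^\top p,p)$; $\mu_{h_B,\mathcal I_{\mathcal Q}}>0$ denotes the strong convexity constant of $h_B$ with respect to $\mathcal I_{\mathcal Q}$. Constants: $\mu_{\mathcal V}=\mu_{f,\mathcal I_{\mathcal V}}$ and $\mu_{\mathcal Q}=(2-L_{f,\mathcal I_{\mathcal V}})\mu_{h_B,\mathcal I_{\mathcal Q}}$. The expression $\nabla\mathcal E(u,p)\cdot\mathcal G(u,p)$ means $(\mathcal I_{\mathcal V}(u-u^* ),\mathcal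 G^u(u,p))+(\mathcal I_{\mathcal Q}(p-p^* ),\mathcal G^p(u,p))$. *)

(* Defs.v *)
From mathcomp Require Import all_boot all_order all_algebra.
From mathcomp Require Import all_classical all_reals all_analysis.
Set Implicit Arguments. Unset Strict Implicit. Unset Printing Implicit Defensive.
Import Order.TTheory GRing.Theory Num.Theory.
Local Open Scope ring_scope.
Local Open Scope classical_set_scope.

Section Defs.
Variable R : realType.

Definition ip (k : nat) (x y : 'cV[R]_k) : R := (x^T *m y) 0 0.

Definition sqnormM (k : nat) (M : 'M[R]_k) (x : 'cV[R]_k) : R := ip (M *m x) x.

Definition spd (k : nat) (M : 'M[R]_k) : Prop :=
  M^T = M /\ forall x : 'cV[R]_k, x != 0 -> 0 < sqnormM M x.

Definition is_gradient (k : nat) (f : 'cV[R]_k -> R) (gf : 'cV[R]_k -> 'cV[R]_k) : Prop :=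
  forall x, differentiable f x /\ forall v, 'd f x v = ip (gf x) v.

Definition convex_fn (k : nat) (f : 'cV[R]_k -> R) : Prop :=
  forall (x y : 'cV[R]_k) (t : R), 0 <= t <= 1 ->
    f (t *: x + (1 - t) *: y) <= t * f x + (1 - t) * f y.

Definition lipschitz_fn (k : nat) (g : 'cV[R]_k -> 'cV[R]_k) : Prop :=
  exists L : R, forall x y, `|g x - g y| <= L * `|x - y|.

Definition bregman (k : nat) (g : 'cV[R]_k -> R) (gg : 'cV[R]_k -> 'cV[R]_k)
  (y x : 'cV[R]_k) : R := g y - g x - ip (gg x) (y - x).

Definition S11 (k : nat) (g : 'cV[R]_k -> R) (gg : 'cV[R]_k -> 'cV[R]_k)
  (M : 'M[R]_k) (mu L : R) : Prop :=
  forall x y : 'cV[R]_k,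
    mu / 2 * sqnormM M (x - y) <= bregman g gg y x <= L / 2 * sqnormM M (x - y).

Definition hB (m n : nat) (h : 'cV[R]_n -> R) (B : 'M[R]_(n, m)) (IV : 'M[R]_m)
  (p : 'cV[R]_n) : R := h p + 1 / 2 * ip (B *m invmx IV *m B^T *m p) p.
Definition ghB (m n : nat) (gh : 'cV[R]_n -> 'cV[R]_n) (B : 'M[R]_(n, m)) (IV : 'M[R]_m)
  (p : 'cV[R]_n) : 'cV[R]_n := gh p + B *m invmx IV *m B^T *m p.

Definition e_map (m : nat) (gf : 'cV[R]_m -> 'cV[R]_m) (IV : 'M[R]_m) (u : 'cV[R]_m)
  : 'cV[R]_m := u - invmx IV *m gf u.

Definition Gu (m n : nat) (gf : 'cV[R]_m -> 'cV[R]_m) (B : 'M[R]_(n, m)) (IV : 'M[R]_m)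
  (u : 'cV[R]_m) (p : 'cV[R]_n) : 'cV[R]_m := - (invmx IV *m (gf u + B^T *m p)).
Definition Gp (m n : nat) (gf : 'cV[R]_m -> 'cV[R]_m) (gh : 'cV[R]_n -> 'cV[R]_n)
  (B : 'M[R]_(n, m)) (IV : 'M[R]_m) (IQ : 'M[R]_n)
  (u : 'cV[R]_m) (p : 'cV[R]_n) : 'cV[R]_n :=
  - (invmx IQ *m (ghB gh B IV p - B *m e_map gf IV u)).

Definition Lyap (m n : nat) (IV : 'M[R]_m) (IQ : 'M[R]_n) (us : 'cV[R]_m) (ps : 'cV[R]_n)
  (u : 'cV[R]_m) (p : 'cV[R]_n) : R :=
  1 / 2 * sqnormM IV (u - us) + 1 / 2 * sqnormM IQ (p - ps).

Definition dLyapG (m n : nat) (gf : 'cV[R]_m -> 'cV[R]_m) (gh : 'cV[R]_n -> 'cV[R]_n)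
  (B : 'M[R]_(n, m)) (IV : 'M[R]_m) (IQ : 'M[R]_n) (us : 'cV[R]_m) (ps : 'cV[R]_n)
  (u : 'cV[R]_m) (p : 'cV[R]_n) : R :=
  ip (IV *m (u - us)) (Gu gf B IV u p) + ip (IQ *m (p - ps)) (Gp gf gh B IV IQ u p).

End Defs.

(* the normed-module view of column vectors provided by MathComp-Analysis *)
Notation nvec R k := (matrix_matrix__canonical__normed_module_NormedModule R k 1).

Definition continuous_fn (R : realType) (k : nat) (g : 'cV[R]_k -> 'cV[R]_k) : Prop :=
  continuous (g : nvec R k -> nvec R k).

Definition cont_nonneg (R : realType) (k : nat) (u : R -> 'cV[R]_k) : Prop :=
  {within `[0, +oo[, continuous (u : R -> nvec R k)}.

(* Main.v *)
Require Import Defs.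
From mathcomp Require Import all_boot all_order all_algebra.
From mathcomp Require Import all_classical all_reals all_analysis.
From mathcomp Require Import ring lra.
Import Order.TTheory GRing.Theory Num.Theory.
Import numFieldNormedType.Exports.
Local Open Scope ring_scope.
Local Open Scope classical_set_scope.
Set Implicit Arguments. Unset Strict Implicit. Unset Printing Implicit Defensive.

Section IP.
Variable R : realType.

Lemma ipE k (x y : 'cV[R]_k) : ip x y = \sum_i x i 0 * y i 0.
Proof. by rewrite /ip !mxE; apply: eq_bigr => i _; rewrite mxE. Qed.

Lemma ipDl k (x y z : 'cV[R]_k) : ip (x + y) z = ip x z + ip y z.
Proof. by rewrite /ip linearD /= mulmxDl mxE. Qed.
Lemma ipDr k (x y z : 'cV[R]_k) : ip z (x + y) = ip z x + ip z y.
Proof. by rewrite /ip mulmxDr mxE. Qed.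
Lemma ipNl k (x z : 'cV[R]_k) : ip (- x) z = - ip x z.
Proof. by rewrite /ip linearN /= mulNmx mxE. Qed.
Lemma ipNr k (x z : 'cV[R]_k) : ip z (- x) = - ip z x.
Proof. by rewrite /ip mulmxN mxE. Qed.
Lemma ipBl k (x y z : 'cV[R]_k) : ip (x - y) z = ip x z - ip y z.
Proof. by rewrite ipDl ipNl. Qed.
Lemma ipBr k (x y z : 'cV[R]_k) : ip z (x - y) = ip z x - ip z y.
Proof. by rewrite ipDr ipNr. Qed.
Lemma ipZl k c (x z : 'cV[R]_k) : ip (c *: x) z = c * ip x z.
Proof. by rewrite /ip linearZ /= -scalemxAl mxE. Qed.
Lemma ipZr k c (x z : 'cV[R]_k) : ip z (c *: x) = c * ip z x.
Proof. by rewrite /ip -scalemxAr mxE. Qed.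
Lemma ipC k (x y : 'cV[R]_k) : ip x y = ip y x.
Proof. by rewrite !ipE; apply: eq_bigr => i _; rewrite mulrC. Qed.
Lemma ip0l k (x : 'cV[R]_k) : ip 0 x = 0.
Proof. by rewrite /ip linear0 mul0mx mxE. Qed.
Lemma ip_mull k l (A : 'M[R]_(l, k)) (x : 'cV[R]_k) (y : 'cV[R]_l) :
  ip (A *m x) y = ip x (A^T *m y).
Proof. by rewrite /ip trmx_mul mulmxA. Qed.
Lemma ip_mulr k l (A : 'M[R]_(k, l)) (x : 'cV[R]_k) (y : 'cV[R]_l) :
  ip x (A *m y) = ip (A^T *m x) y.
Proof. by rewrite ip_mull trmxK. Qed.

Lemma spd_sym k (M : 'M[R]_k) (x y : 'cV[R]_k) : spd M ->
  ip (M *m x) y = ip (M *m y) x.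
Proof. by case=> sM _; rewrite ip_mull sM ipC. Qed.

Lemma sqnorm_ge0 k (M : 'M[R]_k) x : spd M -> 0 <= sqnormM M x.
Proof.
case=> _ pM; have [->|nz] := eqVneq x 0.
  by rewrite /sqnormM mulmx0 ip0l.
exact/ltW/pM.
Qed.

Lemma spd_unit k (M : 'M[R]_k) : spd M -> M \in unitmx.
Proof.
move=> [sM pM]; rewrite unitmxE unitfE; apply/negP => /det0P [v nz vM].
have : 0 < sqnormM M v^T by apply: pM; rewrite trmx_eq0.
rewrite /sqnormM -sM -trmx_mul vM trmx0 ip0l ltxx.
by [].
Qed.

Lemma spd_ip_inv k (M : 'M[R]_k) (x y : 'cV[R]_k) : spd M ->
  ip (M *m x) (invmx M *m y) = ip x y.
Proof.
move=> sp; have uM := spd_unit sp; case: sp => sM _.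
by rewrite ip_mull sM mulmxA mulmxV // mul1mx.
Qed.

Lemma spd_inv_sym k (M : 'M[R]_k) : spd M -> (invmx M)^T = invmx M.
Proof. by case=> sM _; rewrite trmx_inv sM. Qed.

Lemma sqnormN k (M : 'M[R]_k) x : sqnormM M (- x) = sqnormM M x.
Proof. by rewrite /sqnormM mulmxN ipNl ipNr opprK. Qed.

End IP.

Section Conv.
Variable R : realType.

Lemma conv_first k (h : 'cV[R]_k -> R) gh : convex_fn h -> is_gradient h gh ->
  forall x y, ip (gh x) (y - x) <= h y - h x.
Proof.
move=> cvx grd x y.
have [dh dE] := grd x.
have der : derivable h x (y - x) by apply: diff_derivable.
rewrite -dE -deriveE //.
have C := cvg_dnbhs_at_right der.
apply: (cvgr_to_le C).
near=> t.
have t0 : 0 < t by near: t; exact: nbhs_right_gt.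
have t1 : t < 1 by near: t; exact: nbhs_right_lt.
rewrite /= /shift.
have -> : t *: (y - x) + x = t *: y + (1 - t) *: x.
  by rewrite scalerBr scalerBl scale1r addrA addrAC.
have := cvx y x t; rewrite (ltW t0) (ltW t1) => /(_ isT) H.
change (t^-1 * (h (t *: y + (1 - t) *: x) - h x) <= h y - h x).
rewrite mulrC ler_pdivrMr //.
lra.
Unshelve. all: by end_near.
Qed.
End Conv.

Section Key.
Variable R : realType.

Lemma sq_expand k (M : 'M[R]_k) x c y : spd M ->
  sqnormM M (x + c *: y) = sqnormM M x + 2 * c * ip (M *m x) y + c ^+ 2 * sqnormM M y.
Proof.
move=> sM; rewrite /sqnormM mulmxDr -scalemxAr !ipDl !ipDr !ipZl !ipZr.
rewrite (@spd_sym _ _ M y x sM); ring.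
Qed.

Lemma sqZ k (M : 'M[R]_k) c y : sqnormM M (c *: y) = c ^+ 2 * sqnormM M y.
Proof. by rewrite /sqnormM -scalemxAr ipZl ipZr mulrA expr2. Qed.

Lemma S11_key m f gf (IV : 'M[R]_m) muf Lf u us w : spd IV -> S11 f gf IV muf Lf ->
  muf * sqnormM IV (u - us) + muf * ip (IV *m (u - us)) w + (muf - Lf) / 4 * sqnormM IV w
  <= ip (u - us) (gf u - gf us) + ip w (gf u - gf us).
Proof.
move=> sV hS.
have /andP [Sa _] := hS u (us - (1/2) *: w).
have /andP [_ Sb] := hS us (us - (1/2) *: w).
have /andP [Sc _] := hS us (u + (1/2) *: w).
have /andP [_ Sd] := hS u (u + (1/2) *: w).
move: Sa Sb Sc Sd; rewrite /bregman.
have [a ea] : exists a, a = u - us by eexists.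
rewrite -ea.
have e1 : u - (us - (1/2) *: w) = a + (1/2) *: w.
  by rewrite ?ea; apply/matrixP => i j; rewrite !mxE; ring.
have e2 : us - (1/2) *: w - u = - (a + (1/2) *: w).
  by rewrite ?ea; apply/matrixP => i j; rewrite !mxE; ring.
have e3 : us - (us - (1/2) *: w) = (1/2) *: w.
  by rewrite ?ea; apply/matrixP => i j; rewrite !mxE; ring.
have e4 : us - (1/2) *: w - us = - ((1/2) *: w).
  by rewrite ?ea; apply/matrixP => i j; rewrite !mxE; ring.
have e5 : us - (u + (1/2) *: w) = - (a + (1/2) *: w).
  by rewrite ?ea; apply/matrixP => i j; rewrite !mxE; ring.
have e6 : u + (1/2) *: w - us = a + (1/2) *: w.
  by rewrite ?ea; apply/matrixP => i j; rewrite !mxE; ring.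
have e7 : u - (u + (1/2) *: w) = - ((1/2) *: w).
  by rewrite ?ea; apply/matrixP => i j; rewrite !mxE; ring.
have e8 : u + (1/2) *: w - u = (1/2) *: w.
  by rewrite ?ea; apply/matrixP => i j; rewrite !mxE; ring.
rewrite e1 e2 e3 e4 e5 e6 e7 e8 !sqnormN !sq_expand // !sqZ.
rewrite !ipNr !ipDr !ipZr ?ipBr.
have c1 := ipC a (gf u); have c2 := ipC a (gf us).
have c3 := ipC w (gf u); have c4 := ipC w (gf us).
move=> Sa Sb Sc Sd.
rewrite !ipNr. lra.
Qed.
End Key.

Section D.
Variable R : realType.

Lemma sq_sum k (M : 'M[R]_k) (x : 'cV[R]_k) :
  sqnormM M x = \sum_i (\sum_j M i j * x j 0) * x i 0.
Proof.
rewrite /sqnormM ipE; apply: eq_bigr => i _; rewrite !mxE.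
by congr (_ * _).
Qed.

Lemma contM (T : topologicalType) (f g : T -> R) :
  continuous f -> continuous g -> continuous (fun x => f x * g x).
Proof. by move=> cf cg x; apply: continuousM; [exact: cf|exact: cg]. Qed.

Lemma qcont k (M : 'M[R]_k) (c : 'cV[R]_k) :
  continuous (fun x : nvec R k => sqnormM M (x - c)).
Proof.
have -> : (fun x : nvec R k => sqnormM M (x - c)) =
   (fun x : nvec R k => \sum_i (\sum_j M i j * (x j 0 - c j 0)) * (x i 0 - c i 0)).
  apply/funext => x; rewrite sq_sum; apply: eq_bigr => i _; rewrite !mxE.
  by congr (_ * _); apply: eq_bigr => j _; rewrite !mxE.
have ce : forall j, continuous (fun x : nvec R k => x j 0 - c j 0).
  move=> j x; apply: continuousB; first exact: coord_continuous.
  exact: cst_continuous.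
apply: continuous_big => [|i _]; first exact: add_continuous.
apply: contM; last exact: ce.
apply: continuous_big => [|j _]; first exact: add_continuous.
apply: contM; first exact: cst_continuous.
exact: ce.
Qed.

Lemma is_derive_sumf n (F : 'I_n -> R -> R) (t : R) (dF : 'I_n -> R) :
  (forall i, is_derive t 1 (F i) (dF i)) ->
  is_derive t 1 (fun s => \sum_i F i s) (\sum_i dF i).
Proof. by move=> H; have := is_derive_sum H; rewrite fct_sumE. Qed.

Lemma is_derive_mulf (f g : R -> R) (t df dg : R) :
  is_derive t 1 f df -> is_derive t 1 g dg ->
  is_derive t 1 (fun s => f s * g s) (f t * dg + g t * df).
Proof. by move=> Hf Hg; have := is_deriveM Hf Hg. Qed.

Lemma is_derive_entry k (y : R -> 'cV[R]_k) (t : R) (c : 'cV[R]_k) i :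
  derivable y t 1 -> is_derive t 1 (fun s => y s i 0 - c i 0) ('D_1 y t i 0).
Proof.
move=> dy.
have di : derivable (fun s => y s i 0) t 1 by apply: (derivable_mxP y t 1).1.
have e : 'D_1 y t i 0 = 'D_1 (fun s => y s i 0) t by rewrite derive_mx // mxE.
rewrite e; apply: (@is_derive_eq _ _ _ _ _ _ _ ('D_1 (fun s => y s i 0) t - 0)).
  exact: is_deriveB.
by rewrite subr0.
Qed.

Lemma is_derive_sq k (M : 'M[R]_k) (y : R -> 'cV[R]_k) c (t : R) :
  M^T = M -> derivable y t 1 ->
  is_derive t 1 (fun s => sqnormM M (y s - c)) (2 * ip (M *m (y t - c)) ('D_1 y t)).
Proof.
move=> sM dy.
have -> : (fun s => sqnormM M (y s - c)) =
   (fun s => \sum_i (\sum_j M i j * (y s j 0 - c j 0)) * (y s i 0 - c i 0)).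
  apply/funext => x; rewrite sq_sum; apply: eq_bigr => i _; rewrite !mxE.
  by congr (_ * _); apply: eq_bigr => j _; rewrite !mxE.
set y' := 'D_1 y t.
apply: (@is_derive_eq _ _ _ _ _ _ _ (\sum_i ((\sum_j M i j * (y t j 0 - c j 0)) * y' i 0
   + (y t i 0 - c i 0) * (\sum_j M i j * y' j 0)))).
  apply: is_derive_sumf => i.
  apply: is_derive_mulf; last exact: is_derive_entry.
  apply: is_derive_sumf => j.
  exact: (is_deriveZ (M i j) (is_derive_entry c j dy)).
rewrite big_split /=.
have e1 : \sum_i (\sum_j M i j * (y t j 0 - c j 0)) * y' i 0 = ip (M *m (y t - c)) y'.
  rewrite ipE; apply: eq_bigr => i _; rewrite !mxE; congr (_ * _).
  by apply: eq_bigr => j _; rewrite !mxE.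
have e2 : \sum_i (y t i 0 - c i 0) * (\sum_j M i j * y' j 0) = ip (M *m (y t - c)) y'.
  rewrite ip_mull sM ipE; apply: eq_bigr => i _; rewrite !mxE; congr (_ * _).
rewrite e1 e2; ring.
Qed.
End D.

Section P2.
Variable R : realType.

Lemma part2 (m n : nat)
  (B : 'M[R]_(n, m)) (f : 'cV[R]_m -> R) (gf : 'cV[R]_m -> 'cV[R]_m)
  (h : 'cV[R]_n -> R) (gh : 'cV[R]_n -> 'cV[R]_n)
  (IV : 'M[R]_m) (IQ : 'M[R]_n) (us : 'cV[R]_m) (ps : 'cV[R]_n)
  (muf Lf muhB : R) :
  is_gradient h gh -> convex_fn h ->
  gf us + B^T *m ps = 0 -> B *m us = gh ps ->
  spd IV -> spd IQ ->
  S11 f gf IV muf Lf -> 0 < muf -> muf <= Lf -> Lf < 2 ->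
  0 < muhB ->
  (forall x y : 'cV[R]_n,
      muhB / 2 * sqnormM IQ (x - y) <= bregman (hB h B IV) (ghB gh B IV) y x) ->
  forall (u : 'cV[R]_m) (p : 'cV[R]_n),
     Num.min muf ((2 - Lf) * muhB) * Lyap IV IQ us ps u p
     + muf / 2 * sqnormM IV (u + invmx IV *m B^T *m p - (us + invmx IV *m B^T *m ps))
       <= - dLyapG gf gh B IV IQ us ps u p.
Proof.
move=> gH cH sad1 sad2 sV sQ hS muf0 mufL Lf2 muhB0 hBc u p.
have uV := spd_unit sV.
have [a ea] : exists a, a = u - us by eexists.
have [d ed] : exists d, d = p - ps by eexists.
have [w ew] : exists w, w = invmx IV *m (B^T *m d) by eexists.
have [dg edg] : exists dg, dg = gf u - gf us by eexists.
have [dh edh] : exists dh, dh = gh p - gh ps by eexists.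
have Hw : IV *m w = B^T *m d by rewrite ew mulmxA mulmxV // mul1mx.
have g0 : gf us = - (B^T *m ps).
  by apply/eqP; rewrite -addr_eq0; apply/eqP.
have Evv : u + invmx IV *m B^T *m p - (us + invmx IV *m B^T *m ps) = a + w.
  rewrite ea ew ed -!mulmxA !mulmxBr.
  by apply/matrixP => i j; rewrite !mxE; ring.
have E1 : - dLyapG gf gh B IV IQ us ps u p =
    ip a (gf u + B^T *m p) + ip d (ghB gh B IV p - B *m e_map gf IV u).
  by rewrite /dLyapG /Gu /Gp !ipNr !spd_ip_inv // opprD !opprK ea ed.
have V1 : gf u + B^T *m p = dg + IV *m w.
  rewrite Hw edg ed mulmxBr g0.
  by apply/matrixP => i j; rewrite !mxE; ring.
have V2 : ghB gh B IV p - B *m e_map gf IV u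
    = dh - B *m a + B *m w + B *m (invmx IV *m dg).
  rewrite /ghB /e_map edh ea ew edg ed -sad2 g0 -!mulmxA.
  rewrite !(mulmxBr, mulmxN, mulmxDr).
  by apply/matrixP => i j; rewrite !mxE; ring.
have F1 : forall x, ip d (B *m x) = ip (IV *m w) x by move=> x; rewrite ip_mulr Hw.
rewrite E1 V1 V2 Evv /Lyap -ea -ed.
rewrite !ipDr ipNr !F1 spd_ip_inv //.
have K1 := S11_key u us w sV hS.
rewrite -ea -edg in K1.
have mono : 0 <= ip d dh.
  move: (conv_first cH gH p ps) (conv_first cH gH ps p).
  have -> : ps - p = - d by rewrite ed opprB.
  rewrite -ed ipNr edh ipBr.
  have := ipC d (gh p); have := ipC d (gh ps). lra.
have hB1 : muhB * sqnormM IQ d <= ip d dh + sqnormM IV w.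
  have b1 := hBc p ps. have b2 := hBc ps p.
  have VG : ghB gh B IV p - ghB gh B IV ps = dh + B *m w.
    rewrite /ghB edh ew ed -!mulmxA !mulmxBr.
    by apply/matrixP => i j; rewrite !mxE; ring.
  have G : ip (ghB gh B IV p) d - ip (ghB gh B IV ps) d = ip d dh + sqnormM IV w.
    by rewrite -ipBl VG ipDl ip_mull -Hw [ip dh d]ipC [ip w _]ipC.
  move: b1 b2; rewrite /bregman.
  have -> : ps - p = - d by rewrite ed opprB.
  rewrite -ed sqnormN !ipNr.
  move: G. lra.
rewrite /sqnormM mulmxDr !ipDl !ipDr.
have s1 := @spd_sym _ _ IV a w sV.
have s2 := ipC a (IV *m w).
rewrite /sqnormM in K1 hB1.
have Na0 := sqnorm_ge0 a sV; have Np0 := sqnorm_ge0 d sQ; have W0 := sqnorm_ge0 w sV.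
rewrite /sqnormM in Na0 Np0 W0.
set mu := Num.min _ _.
have m1 : mu <= muf by rewrite /mu ge_min lexx.
have m2 : mu <= (2 - Lf) * muhB by rewrite /mu ge_min lexx orbT.
have P1 := ler_wpM2r Na0 m1.
have P2 := ler_wpM2r Np0 m2.
have P3 : (2 - Lf) * (muhB * ip (IQ *m d) d) <= (2 - Lf) * (ip d dh + ip (IV *m w) w).
  by apply: ler_wpM2l => //; lra.
have P4 : 0 <= Lf * ip d dh by apply: mulr_ge0 => //; lra.
have P5 : 0 <= (Lf - muf) * ip (IV *m w) w by apply: mulr_ge0 => //; lra.
move: s1 s2 K1 hB1 Na0 Np0 W0 P1 P2 P3 P4 P5.
move: (ip (IV *m a) a) (ip (IV *m a) w) (ip (IV *m w) a) (ip (IV *m w) w) (ip (IQ *m d) d) (ip a dg) (ip w dg) (ip d dh) (ip a (IV *m w)) => Na C1 C2 W Np A1 A2 Hh X.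
move=> q1 q2 q3 q4 q5 q6 q7 q8 q9 q10 q11 q12. clearbody mu. nra.
Qed.
End P2.

Section P3.
Variable R : realType.

Lemma is_derive_expM (a x : R) : is_derive x 1 (fun s => expR (a * s)) (a * expR (a * x)).
Proof.
have dl : forall y : R, is_derive y 1 (fun s : R => a * s) a.
  move=> z.
  have H := is_deriveZ a (is_derive_id z 1).
  apply: (is_derive_eq H).
  by rewrite /GRing.scale /= mulr1.
have dfl : differentiable (fun s : R => a * s) x.
  by apply/derivable1_diffP; case: (dl x).
have dfe : differentiable (@expR R) (a * x).
  by apply/derivable1_diffP; case: (is_derive_expR (a * x)).
apply: DeriveDef.
  by apply/derivable1_diffP; exact: (differentiable_comp dfl dfe).
rewrite -derive1E.
rewrite (derive1_comp (f := fun s : R => a * s) (g := @expR R)).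
- by rewrite !derive1E !derive_val mulrC.
- by case: (dl x).
- by case: (is_derive_expR (a * x)).
Qed.


Lemma contD (T : topologicalType) (f g : T -> R) :
  continuous f -> continuous g -> continuous (fun x => f x + g x).
Proof. by move=> cf cg x; apply: continuousD; [exact: cf|exact: cg]. Qed.

Lemma part3 (m n : nat) (B : 'M[R]_(n, m)) (gf : 'cV[R]_m -> 'cV[R]_m)
  (gh : 'cV[R]_n -> 'cV[R]_n) (IV : 'M[R]_m) (IQ : 'M[R]_n)
  (us : 'cV[R]_m) (ps : 'cV[R]_n) (mu : R) :
  spd IV -> spd IQ ->
  (forall u p, mu * Lyap IV IQ us ps u p <= - dLyapG gf gh B IV IQ us ps u p) ->
  (forall (u : R -> 'cV[R]_m) (p : R -> 'cV[R]_n),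
     cont_nonneg u -> cont_nonneg p ->
     (forall t : R, 0 < t ->
        derivable u t 1 /\ derivable p t 1 /\
        u^`() t = Gu gf B IV (u t) (p t) /\
        p^`() t = Gp gf gh B IV IQ (u t) (p t)) ->
     forall t : R, 0 < t ->
       Lyap IV IQ us ps (u t) (p t) <= expR (- (mu * t)) * Lyap IV IQ us ps (u 0) (p 0)).
Proof.
move=> sV sQ key u p cu cp hd t t0.
have [sVt _] := sV; have [sQt _] := sQ.
pose E := fun s => Lyap IV IQ us ps (u s) (p s).
pose F := fun s => expR (mu * s) * E s.
have dE : forall x : R, 0 < x -> is_derive x 1 E (dLyapG gf gh B IV IQ us ps (u x) (p x)).
  move=> x x0; have [du [dp [eu ep]]] := hd x x0.
  have H1 := is_deriveZ (1/2) (is_derive_sq us sVt du).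
  have H2 := is_deriveZ (1/2) (is_derive_sq ps sQt dp).
  have H := is_deriveD H1 H2.
  apply: (is_derive_eq H).
  rewrite /dLyapG -eu -ep !derive1E /GRing.scale /=.
  by rewrite !mulrA div1r mulVf ?mul1r // pnatr_eq0.
have dF : forall x : R, 0 < x -> is_derive x 1 F
     (expR (mu * x) * dLyapG gf gh B IV IQ us ps (u x) (p x) + E x * (mu * expR (mu * x))).
  move=> x x0; exact: is_derive_mulf (is_derive_expM mu x) (dE x x0).
have cexp : continuous (fun s : R => expR (mu * s)).
  move=> x; apply: differentiable_continuous; apply/derivable1_diffP.
  by case: (is_derive_expM mu x).
have c1 : {within `[0, +oo[, continuous (fun s => sqnormM IV (u s - us))}.
  move=> x; exact: (continuous_comp (cu x) (@qcont R m IV us (u x))).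
have c2 : {within `[0, +oo[, continuous (fun s => sqnormM IQ (p s - ps))}.
  move=> x; exact: (continuous_comp (cp x) (@qcont R n IQ ps (p x))).
have cE : {within `[0, +oo[, continuous E}.
  rewrite /E /Lyap; apply: contD; apply: contM => //; exact: cst_continuous.
have cF : {within `[0, +oo[, continuous F}.
  apply: contM => //; exact: continuous_subspaceT.
have Fle : F t <= F 0.
  apply: (@ler0_derive1_le_cc R F 0 t).
  - move=> x; rewrite in_itv /= => /andP [x0 _]; by case: (dF x x0).
  - move=> x; rewrite in_itv /= => /andP [x0 _].
    rewrite derive1E (@derive_val _ _ _ _ _ _ _ (dF x x0)).
    have k := key (u x) (p x).
    have ep := expR_gt0 (mu * x).
    rewrite -/(E x) in k.
    have : expR (mu * x) * (dLyapG gf gh B IV IQ us ps (u x) (p x) + mu * E x) <= 0.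
      by apply: mulr_ge0_le0; [exact: ltW | lra].
    lra.
  - apply: continuous_subspaceW cF => y /=; rewrite !in_itv /= => /andP [y0 _].
    by rewrite y0.
  - by rewrite in_itv /= lexx ltW.
  - by rewrite in_itv /= lexx ltW.
  - exact: ltW.
rewrite /F mulr0 expR0 mul1r in Fle.
have -> : Lyap IV IQ us ps (u t) (p t) = expR (- (mu * t)) * F t.
  by rewrite /F mulrA -expRD addNr expR0 mul1r.
apply: ler_wpM2l => //; exact: ltW (expR_gt0 _).
Qed.

End P3.

Unset Implicit Arguments.

Theorem theorem3p2 (R : realType) (m n : nat)
  (B : 'M[R]_(n, m)) (f : 'cV[R]_m -> R) (gf : 'cV[R]_m -> 'cV[R]_m)
  (h : 'cV[R]_n -> R) (gh : 'cV[R]_n -> 'cV[R]_n)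
  (IV : 'M[R]_m) (IQ : 'M[R]_n) (us : 'cV[R]_m) (ps : 'cV[R]_n)
  (muf Lf muhB : R) :
  (n <= m)%N -> \rank B = n ->
  is_gradient f gf -> is_gradient h gh ->
  convex_fn f -> convex_fn h ->
  continuous_fn gf -> continuous_fn gh ->
  lipschitz_fn gf -> lipschitz_fn gh ->
  (* (us, ps) is the saddle point of L(u,p) = f u - h p + (B u, p) *)
  gf us + B^T *m ps = 0 -> B *m us = gh ps ->
  spd IV -> spd IQ ->
  S11 f gf IV muf Lf -> 0 < muf -> muf <= Lf -> Lf < 2 ->
  (* muhB is the strong convexity constant of h_B with respect to IQ *)
  0 < muhB ->
  (forall x y : 'cV[R]_n,
      muhB / 2 * sqnormM IQ (x - y) <= bregman (hB h B IV) (ghB gh B IV) y x) ->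
  let mu := Num.min muf ((2 - Lf) * muhB) in
  0 < mu /\
  (forall (u : 'cV[R]_m) (p : 'cV[R]_n),
     let v := u + invmx IV *m B^T *m p in
     let vs := us + invmx IV *m B^T *m ps in
     mu * Lyap IV IQ us ps u p + muf / 2 * sqnormM IV (v - vs)
       <= - dLyapG gf gh B IV IQ us ps u p) /\
  (forall (u : R -> 'cV[R]_m) (p : R -> 'cV[R]_n),
     cont_nonneg u -> cont_nonneg p ->
     (forall t : R, 0 < t ->
        derivable u t 1 /\ derivable p t 1 /\
        u^`() t = Gu gf B IV (u t) (p t) /\
        p^`() t = Gp gf gh B IV IQ (u t) (p t)) ->
     forall t : R, 0 < t ->
       Lyap IV IQ us ps (u t) (p t) <= expR (- (mu * t)) * Lyap IV IQ us ps (u 0) (p 0)).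
Proof.
move=> nm rk gF gH cF cH contf conth lf lh sad1 sad2 sV sQ hS muf0 mufL Lf2 muhB0 hBc mu.
have mu0 : 0 < mu.
  by rewrite /mu lt_min muf0 /= mulr_gt0 // subr_gt0.
have P2 := part2 gH cH sad1 sad2 sV sQ hS muf0 mufL Lf2 muhB0 hBc.
split; first exact: mu0.
split.
  move=> u p; exact: (P2 u p).
apply: part3 => // u p.
have := P2 u p.
have := sqnorm_ge0 (u + invmx IV *m B^T *m p - (us + invmx IV *m B^T *m ps)) sV.
rewrite -/mu.
move: (sqnormM IV _) => X X0 H.
have : 0 <= muf / 2 * X by apply: mulr_ge0 => //; lra.
lra.
Qed.
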